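(* Let $T_1=(Q_1,\Sigma,\Delta,R_1,q_1^0)$ and $T_2=(Q_2,\Delta,\Omega,R_2,q_2^0)$ be top-down tree transducers, let $\hat{T}_1$ be the product construction of $T_1$ and the domain automaton of $T_2$, and let $M$ be the look-ahead transducer constructed from $T_1$ and $T_2$ as described in the context. Let $(q_1,S)$ be a state of $\hat{T}_1$ and $q_2$ a state of $T_2$ with $q_2\in S$. Then for the state $(q_1,S,q_2)$ of $M$, $\text{dom}((q_1,S,q_2))=\text{dom}((q_1,S))$.
   Context: A top-down tree transducer $T=(Q,\Sigma,\Delta,R,q_0)$ has finite state set $Q$, ranked input/output alphabets $\Sigma,\Delta$, initial state $q_0$, and finite rule set $R$ of rules $q(a(x_1,\dots,x_k))\to t$ with $a\in\Sigma_k$ ($\Sigma_k$ = symbols of rank $k$) and $t$ a tree over $\Delta$ whose leaves may additionally be of the form $q'(x_i)$, $q'\in Q$, $i\in[k]$; rules are used as rewrite rules in the usual way; for a state $q$ (of a transducer, with or without look-ahead), $\text{dom}(q)$ is the set of input trees $s$ on which $q$ produces at least one output tree (containing no states). For $q\in Q$, $a\in\Sigma_k$, $\text{rhs}_T(q,a)$ is the set of right-hand sides of rules with left-hand side $q(a(x_1,\dots,x_k))$; for a right-hand side $\xi$ (resp. a set $\Gamma$ of right-hand sides), $\xi[x_i]$ (resp. $\Gamma[x_i]$) is the set of states $q'$ such that $q'(x_i)$ occurs in $\xi$ (resp. in some tree of $\Gamma$). Domain automaton of $T$: the top-down tree automaton (transducer over $\Sigma$ with rules of the form $p(a(x_1,\dots,x_k))\to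 a(p_1(x_1),\dots,p_k(x_k))$) with states all subsets of $Q$, initial state $\{q_0\}$, rules $S(a(x_1,\dots,x_k))\to a(S_1(x_1),\dots,S_k(x_k))$ for every $a\in\Sigma_k$, nonempty $S=\{q_1,\dots,q_n\}\subseteq Q$ and nonempty $\Gamma_j\subseteq\text{rhs}_T(q_j,a)$ ($j\in[n]$), where $S_i=\bigcup_j\Gamma_j[x_i]$, and rules $\emptyset(a(x_1,\dots,x_k))\to a(\emptyset(x_1),\dots,\emptyset(x_k))$ for all $a$; for an automaton state $l$, $\text{dom}(l)$ is the set of trees accepted from $l$. Product construction of transducers $T=(Q,\Sigma,\Delta,R,q_0)$ and $T'=(Q',\Delta,\Omega,R',q'_0)$: the transducer with states $Q\times Q'$, initial state $(q_0,q'_0)$, and, for every rule $q(a(x_1,\dots,x_k))\to\xi$ of $T$, every $p\in Q'$ and every tree $\zeta$ derivable from $p(\xi)$ using rules of $T'$ in which the leaves of $\xi$ of the form $q''(x_i)$ are treated as unrewritable symbols and a state $p'$ applied to such a leaf stays as $p'(q''(x_i))$, the rule $(q,p)(a(x_1,\dots,x_k))\to\zeta'$ (said to be obtained from the rule $q(a(x_1,\dots,x_k))\to\xi$ by translating $\xi$ with $p$), where $\zeta'$ replaces each $p'(q''(x_i))$ by $(q'',p')(x_i)$. A top-down tree transducer with look-ahead is a tuple $(Q,\Sigma,\Delta,R,q_0,B)$ where $B$ is a top-down tree automaton over $\Sigma$ with state set $L$ and rules have the form $q(a(x_1\!:\!l_1,\dots,x_k\!:\!l_k))\to t$ with $l_i\in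 L$; on input $s$, each node $v$ with label $a\in\Sigma_k$ is first relabeled by $\langle a,l_1,\dots,l_k\rangle$ where $l_i\in L$ are such that the $i$-th subtree of $v$ is in $\text{dom}(l_i)$, and the relabeled tree is then processed reading each rule as $q(\langle a,l_1,\dots,l_k\rangle(x_1,\dots,x_k))\to t$. Construction of $M$: let $\hat{T}_1$ be the product construction of $T_1$ and the domain automaton of $T_2$ (states written $(q,S)$ with $q\in Q_1$, $S\subseteq Q_2$), and $N$ the product construction of $\hat{T}_1$ and $T_2$ (states written $(q,S,q')$). The states of $M$ are the $(q,S,q')$ with $q'\in S$; its initial state is $(q_1^0,\{q_2^0\},q_2^0)$; its look-ahead automaton is the domain automaton $\hat{A}$ of $\hat{T}_1$. For every rule $(q,S,q')(a(x_1,\dots,x_k))\to\gamma$ of $N$ involving only such states, obtained from the rule $(q,S)(a(x_1,\dots,x_k))\to\xi$ of $\hat{T}_1$ by translating $\xi$ with $q'$, and for all states $l_1,\dots,l_k$ of $\hat{A}$ with $\xi[x_i]\subseteq l_i$ ($i\in[k]$), $M$ has the rule $(q,S,q')(a(x_1\!:\!l_1,\dots,x_k\!:\!l_k))\to\gamma$. *)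

(* Defs.v *)
From mathcomp Require Import all_boot.
From Stdlib Require List.

Set Implicit Arguments.
Unset Strict Implicit.
Unset Printing Implicit Defensive.

(* An alphabet is a finType [L] with a rank function
   [rk : L -> nat]; [tree L] are (a priori unranked) trees, and
   [wf_tree rk t] says that t is a tree over the ranked alphabet (L, rk).     *)
Inductive tree (L : Type) := Node of L & seq (tree L).
Arguments Node {L}.

Inductive wf_tree (L : Type) (rk : L -> nat) : tree L -> Prop :=
| wf_tree_node a ss :
    size ss = rk a -> (forall s, List.In s ss -> wf_tree rk s) ->
    wf_tree rk (Node a ss).

(* Right-hand sides: trees over L whose leaves may be q(x_i).
   [RVar q i] stands for q(x_{i+1}): variables are indexed from 0,
   so x_1,...,x_k are RVar _ 0, ..., RVar _ (k-1). *)
Inductive rhs (Q L : Type) := RVar of Q & nat | RNode of L & seq (rhs Q L).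
Arguments RVar {Q L}.
Arguments RNode {Q L}.

Inductive wf_rhs (Q L : Type) (rk : L -> nat) (k : nat) : rhs Q L -> Prop :=
| wf_rhs_var q i : i < k -> wf_rhs rk k (RVar q i)
| wf_rhs_node b xs :
    size xs = rk b -> (forall x, List.In x xs -> wf_rhs rk k x) ->
    wf_rhs rk k (RNode b xs).

Inductive occurs (Q L : Type) (q : Q) (i : nat) : rhs Q L -> Prop :=
| occurs_var : occurs q i (RVar q i)
| occurs_node b xs x : List.In x xs -> occurs q i x -> occurs q i (RNode b xs).

Inductive subst (Q L X : Type) (emb : L -> seq X -> X) (F : Q -> nat -> X -> Prop)
  : rhs Q L -> X -> Prop :=
| subst_var q i x : F q i x -> subst emb F (RVar q i) x
| subst_node b xis xs :
    List.Forall2 (subst emb F) xis xs -> subst emb F (RNode b xis) (emb b xs).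

(* Top-down tree transducers.  The rule set is given as a predicate
   [rule q a xi] meaning  q(a(x_1,...,x_k)) -> xi  is a rule. *)
Record tdtt (Q Sig Del : Type) := TDTT {
  rule : Q -> Sig -> rhs Q Del -> Prop;
  init : Q }.

Definition is_tdtt (Q Sig Del : Type) (rkS : Sig -> nat) (rkD : Del -> nat)
  (T : tdtt Q Sig Del) : Prop :=
  (exists l : list (Q * Sig * rhs Q Del),
      forall q a x, rule T q a x <-> List.In (q, a, x) l) /\
  (forall q a x, rule T q a x -> wf_rhs rkD (rkS a) x).

(* Semantics (derivations with the rules used as rewrite rules):
   [sem R q s t] : from q(s) the output tree t (without states) is derivable. *)
Inductive sem (Q Sig Del : Type) (R : Q -> Sig -> rhs Q Del -> Prop)
  : Q -> tree Sig -> tree Del -> Prop :=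
| sem_rule q a ss xi t :
    R q a xi ->
    subst (@Node Del)
      (fun q' i t' => exists s', List.nth_error ss i = Some s' /\ sem R q' s' t')
      xi t ->
    sem R q (Node a ss) t.

Definition dom (Q Sig Del : Type) (R : Q -> Sig -> rhs Q Del -> Prop) (q : Q)
  (s : tree Sig) : Prop := exists t, sem R q s t.

(* Product construction.  [translate R' p xi z] : z = zeta' where zeta is a
   tree derivable from p(xi) with the rules R' of T', leaves q''(x_i) of xi
   being unrewritable (p'(q''(x_i)) stays), and each p'(q''(x_i)) replaced
   by (q'',p')(x_i). *)
Inductive translate (Q Q' Del Om : Type) (R' : Q' -> Del -> rhs Q' Om -> Prop)
  : Q' -> rhs Q Del -> rhs (Q * Q') Om -> Prop :=
| translate_var p q i : translate R' p (RVar q i) (RVar (q, p) i)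
| translate_node p b xis eta z :
    R' p b eta ->
    subst (@RNode (Q * Q') Om)
      (fun p' j z' => exists xj, List.nth_error xis j = Some xj /\ translate R' p' xj z')
      eta z ->
    translate R' p (RNode b xis) z.

Definition prod_rule (Q Q' Sig Del Om : Type)
  (R : Q -> Sig -> rhs Q Del -> Prop) (R' : Q' -> Del -> rhs Q' Om -> Prop)
  (qp : Q * Q') (a : Sig) (z : rhs (Q * Q') Om) : Prop :=
  exists xi, R qp.1 a xi /\ translate R' qp.2 xi z.

(* Domain automaton of a transducer with rules R, input alphabet (Sig,rk):
   states {set Q}, rules S(a(x_1..x_k)) -> a(S_1(x_1),...,S_k(x_k)). *)
Definition dom_aut_rule (Q : finType) (Sig Del : Type) (rk : Sig -> nat)
  (R : Q -> Sig -> rhs Q Del -> Prop)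
  (S : {set Q}) (a : Sig) (xi : rhs {set Q} Sig) : Prop :=
  exists Ss : seq {set Q},
    size Ss = rk a /\
    xi = RNode a [seq RVar (nth set0 Ss i) i | i <- iota 0 (rk a)] /\
    ( (S = set0 /\ forall i, i < rk a -> nth set0 Ss i = set0)
      \/
      (S != set0 /\
       exists Gamma : Q -> rhs Q Del -> Prop,
         (forall q, q \in S ->
            (exists x, Gamma q x) /\ (forall x, Gamma q x -> R q a x)) /\
         (forall i, i < rk a -> forall q',
            q' \in nth set0 Ss i <->
            exists2 q, q \in S & exists x, Gamma q x /\ occurs q' i x))).

(* Top-down tree transducers with look-ahead.  A rule
   q(a(x_1:l_1,...,x_k:l_k)) -> t is represented as [R q (a, [:: l_1;..;l_k]) t].
   [domL l] is dom(l) for the look-ahead automaton. *)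
Inductive relabel (Sig L : Type) (domL : L -> tree Sig -> Prop)
  : tree Sig -> tree (Sig * seq L) -> Prop :=
| relabel_node a ss ls rs :
    List.Forall2 domL ls ss ->
    List.Forall2 (relabel domL) ss rs ->
    relabel domL (Node a ss) (Node (a, ls) rs).

Definition la_dom (Q Sig Om L : Type) (domL : L -> tree Sig -> Prop)
  (R : Q -> Sig * seq L -> rhs Q Om -> Prop) (q : Q) (s : tree Sig) : Prop :=
  exists r, relabel domL s r /\ dom R q r.

Section Construction.
Variables (Q1 Q2 : finType) (Sig Del Om : Type).
Variables (rkS : Sig -> nat) (rkD : Del -> nat).
Variables (R1 : Q1 -> Sig -> rhs Q1 Del -> Prop) (R2 : Q2 -> Del -> rhs Q2 Om -> Prop).

Definition hat_rule : Q1 * {set Q2} -> Sig -> rhs (Q1 * {set Q2}) Del -> Prop :=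
  prod_rule R1 (dom_aut_rule rkD R2).

Definition N_rule : Q1 * {set Q2} * Q2 -> Sig -> rhs (Q1 * {set Q2} * Q2) Om -> Prop :=
  prod_rule hat_rule R2.

Definition Mvalid (x : Q1 * {set Q2} * Q2) : bool := x.2 \in x.1.2.

Definition Ahat_rule :=
  dom_aut_rule rkS hat_rule.

Definition M_rule (x : Q1 * {set Q2} * Q2)
  (al : Sig * seq {set (Q1 * {set Q2})}) (g : rhs (Q1 * {set Q2} * Q2) Om) : Prop :=
  Mvalid x /\ (forall y i, occurs y i g -> Mvalid y) /\
  size al.2 = rkS al.1 /\
  exists xi, hat_rule x.1 al.1 xi /\ translate R2 x.2 xi g /\
    (forall i, i < rkS al.1 -> forall y, occurs y i xi -> y \in nth set0 al.2 i).

Definition M_init (q10 : Q1) (q20 : Q2) : Q1 * {set Q2} * Q2 := (q10, [set q20], q20).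

Definition M_dom (x : Q1 * {set Q2} * Q2) (s : tree Sig) : Prop :=
  la_dom (dom Ahat_rule) M_rule x s.

End Construction.

(* Main.v *)
Require Import Defs.
From mathcomp Require Import all_boot.
From Stdlib Require Import ClassicalEpsilon.
From Stdlib Require List.
Import List.ListNotations.
Notation Forall2 := List.Forall2.
Notation nth_error := List.nth_error.
Notation nth_error_In := List.nth_error_In.

Definition tree_ind' (L : Type) (P : tree L -> Prop)
  (H : forall a ss, (forall s, List.In s ss -> P s) -> P (Node a ss)) :
  forall t, P t :=
  fix F (t : tree L) : P t :=
  match t with
  | Node a ss => H a ss
      ((fix go (l : seq (tree L)) : forall s, List.In s l -> P s :=
          match l with
          | nil => fun s hin => False_ind _ hin
          | cons x l' => fun s hin =>
              match hin with
              | or_introl e => eq_ind x P (F x) s e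
              | or_intror h => go l' s h
              end
          end) ss)
  end.

Definition rhs_ind' (Q L : Type) (P : rhs Q L -> Prop)
  (Hv : forall q i, P (RVar q i))
  (H : forall a ss, (forall s, List.In s ss -> P s) -> P (RNode a ss)) :
  forall t, P t :=
  fix F (t : rhs Q L) : P t :=
  match t with
  | RVar q i => Hv q i
  | RNode a ss => H a ss
      ((fix go (l : seq (rhs Q L)) : forall s, List.In s l -> P s :=
          match l with
          | nil => fun s hin => False_ind _ hin
          | cons x l' => fun s hin =>
              match hin with
              | or_introl e => eq_ind x P (F x) s e
              | or_intror h => go l' s h
              end
          end) ss)
  end.

Lemma Forall2_In_r {A B : Type} {R : A -> B -> Prop} {l1 l2 y} :
  Forall2 R l1 l2 -> List.In y l2 -> exists x, List.In x l1 /\ R x y.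
Proof.
  induction 1 as [|x y' l1 l2 Hxy _ IH]; [intros []|].
  intros [<-|Hin]; [exists x; simpl; auto|].
  destruct (IH Hin) as [x' [? ?]]; exists x'; simpl; auto.
Qed.

Lemma Forall2_In_l {A B : Type} {R : A -> B -> Prop} {l1 l2 x} :
  Forall2 R l1 l2 -> List.In x l1 -> exists y, List.In y l2 /\ R x y.
Proof.
  induction 1 as [|x' y' l1 l2 Hxy _ IH]; [intros []|].
  intros [<-|Hin]; [exists y'; simpl; auto|].
  destruct (IH Hin) as [y [? ?]]; exists y; simpl; auto.
Qed.

Lemma Forall2_nth_err {A B : Type} {R : A -> B -> Prop} {l1 l2 i x} :
  Forall2 R l1 l2 -> nth_error l1 i = Some x ->
  exists y, nth_error l2 i = Some y /\ R x y.
Proof.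
  intros H; revert i; induction H as [|x' y' l1 l2 Hxy _ IH]; intros [|i]; simpl;
    try discriminate.
  - intros [= <-]; eauto.
  - apply IH.
Qed.

Lemma Forall2_exists (A B : Type) (R : A -> B -> Prop) l :
  (forall x, List.In x l -> exists y, R x y) -> exists l', Forall2 R l l'.
Proof.
  induction l as [|x l IH]; intros H; [exists nil; constructor|].
  destruct (H x (or_introl erefl)) as [y Hy].
  destruct IH as [l' Hl']; [intros; apply H; simpl; auto|].
  exists (y :: l'); constructor; auto.
Qed.

Lemma Forall2_size {A B : Type} {R : A -> B -> Prop} {l1 l2} :
  Forall2 R l1 l2 -> size l1 = size l2.
Proof. induction 1; simpl; congruence. Qed.

Lemma nth_error_nth (A : Type) (x0 : A) (l : seq A) i :
  i < size l -> nth_error l i = Some (nth x0 l i).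
Proof.
  revert i; induction l as [|x l IH]; intros [|i]; simpl; try discriminate; auto.
Qed.

Lemma nth_error_nthE (A : Type) (x0 : A) (l : seq A) i x :
  nth_error l i = Some x -> nth x0 l i = x /\ i < size l.
Proof.
  revert i; induction l as [|y l IH]; intros [|i]; simpl; try discriminate.
  - intros [= ->]; auto.
  - apply IH.
Qed.

Lemma subst_occ {Q L X : Type} {emb : L -> seq X -> X} {F} {xi : rhs Q L} {t q i} :
  subst emb F xi t -> occurs q i xi -> exists x, F q i x.
Proof.
  revert t; induction xi as [q' j|b xs IH] using rhs_ind'; intros t Hs Ho.
  - inversion Ho; subst; inversion Hs; subst; eauto.
  - inversion Ho as [|b' xs' x Hin Ho']; subst.
    inversion Hs as [|b' xis ts Hf]; subst.
    destruct (Forall2_In_l Hf Hin) as [y [_ Hy]].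
    eapply IH; eauto.
Qed.

Lemma occ_subst (Q L X : Type) (emb : L -> seq X -> X) (F : Q -> nat -> X -> Prop)
  (xi : rhs Q L) :
  (forall q i, occurs q i xi -> exists x, F q i x) -> exists t, subst emb F xi t.
Proof.
  induction xi as [q' j|b xs IH] using rhs_ind'; intros H.
  - destruct (H q' j (occurs_var _ _ _)) as [x Hx]; exists x; constructor; auto.
  - destruct (@Forall2_exists _ _ (subst emb F) xs) as [ts Hts].
    + intros x Hin; apply IH; auto.
      intros q i Ho; apply H; econstructor; eauto.
    + exists (emb b ts); constructor; auto.
Qed.

Lemma subst_mono (Q L X : Type) (emb : L -> seq X -> X) (F G : Q -> nat -> X -> Prop)
  (xi : rhs Q L) t :
  (forall q i x, F q i x -> G q i x) -> subst emb F xi t -> subst emb G xi t.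
Proof.
  intros HFG; revert t; induction xi as [q' j|b xs IH] using rhs_ind'; intros t Hs.
  - inversion Hs; subst; constructor; auto.
  - inversion Hs as [|b' xis ts Hf]; subst; constructor.
    clear Hs; induction Hf; constructor.
    + apply IH; simpl; auto.
    + apply IHHf; intros; apply IH; simpl; auto.
Qed.

Lemma subst_occ_back {Q L Q2 : Type} {F : Q -> nat -> rhs Q2 L -> Prop}
  {xi : rhs Q L} {z q i} :
  subst (@RNode Q2 L) F xi z -> occurs q i z ->
  exists q' j z', F q' j z' /\ occurs q i z'.
Proof.
  revert z; induction xi as [q' j|b xs IH] using rhs_ind'; intros z Hs Ho.
  - inversion Hs; subst; eauto.
  - inversion Hs as [|b' xis ts Hf]; subst.
    inversion Ho as [|b' xs' x Hin Ho']; subst.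
    destruct (Forall2_In_r Hf Hin) as [y [Hy Hyx]].
    eapply IH; eauto.
Qed.

Lemma translate_occ {Q Q' Del Om : Type} {R' : Q' -> Del -> rhs Q' Om -> Prop}
  {p} {xi : rhs Q Del} {z q i} :
  translate R' p xi z -> occurs q i z -> exists q0, occurs q0 i xi.
Proof.
  revert p z; induction xi as [q' j|b xs IH] using rhs_ind'; intros p z Ht Ho.
  - inversion Ht; subst. inversion Ho; subst. exists q'; constructor.
  - inversion Ht as [|p' b' xis eta z' HR Hs]; subst.
    destruct (subst_occ_back Hs Ho) as [q1 [j [z1 [[xj [Hn Ht1]] Ho1]]]].
    destruct (IH xj (nth_error_In _ _ Hn) _ _ Ht1 Ho1) as [q0 Hq0].
    exists q0; econstructor; eauto using nth_error_In.
Qed.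

Lemma wf_occ {Q L : Type} {rk : L -> nat} {k} {xi : rhs Q L} {q i} :
  wf_rhs rk k xi -> occurs q i xi -> i < k.
Proof.
  intros Hw Ho; induction Ho as [|b xs x Hin Ho IH].
  - inversion Hw; auto.
  - inversion Hw as [|b' xs' _ Hall]; subst; auto.
Qed.

Definition pb (P : Prop) : bool := if excluded_middle_informative P then true else false.
Lemma pbP (P : Prop) : pb P <-> P.
Proof. rewrite /pb; case: excluded_middle_informative => //; split => //. Qed.

Lemma In_map_iota_gen {A : Type} (f : nat -> A) k x : forall m,
  List.In x [seq f j | j <- iota m k] <-> exists j, m <= j /\ j < m + k /\ x = f j.
Proof.
  elim: k => [|k IH] m /=.
  - split; [by []|]. move=> [j [H1 [H2 _]]]. rewrite addn0 in H2.
    by rewrite leqNgt H2 in H1.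
  - rewrite IH; split.
    + move=> [<-|[j [H1 [H2 ->]]]]; [exists m; by rewrite leqnn addnS ltnS leq_addr|].
      exists j; split; [by apply ltnW|split=>//]. by rewrite addnS -addSn.
    + move=> [j [H1 [H2 ->]]]. case: (eqVneq m j) => [->|Hne]; [by left|right].
      exists j; split; [by rewrite ltn_neqAle Hne H1|split=>//]. by rewrite addSnnS.
Qed.

Lemma In_map_iota {A : Type} (f : nat -> A) k x :
  List.In x [seq f j | j <- iota 0 k] <-> exists j, j < k /\ x = f j.
Proof.
  rewrite In_map_iota_gen; split.
  - move=> [j [_ [H ->]]]; eauto.
  - move=> [j [H ->]]; exists j; auto.
Qed.

Lemma domA (Q : finType) (Sig Del : Type) (rk : Sig -> nat)
  (R : Q -> Sig -> rhs Q Del -> Prop)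
  (wfR : forall q a x q' i, R q a x -> occurs q' i x -> i < rk a) :
  forall s (l : {set Q}) t, sem (dom_aut_rule rk R) l s t -> forall y, y \in l -> dom R y s.
Proof.
  intros s; induction s as [a ss IH] using tree_ind'.
  intros l t Hs y Hy.
  inversion Hs as [l' a' ss' xi t' Hr Hsub]; subst.
  destruct Hr as [Ss [Hsz [-> [[-> _]|[_ [Gamma [HG HSs]]]]]]].
  { by rewrite inE in Hy. }
  destruct (HG y Hy) as [[x Hx] HxR].
  have [t' Ht'] : exists t', subst (@Node Del)
      (fun q' i t' => exists s', nth_error ss i = Some s' /\ sem R q' s' t') x t'.
  { apply occ_subst; intros q' i Ho.
    have Hi := wfR _ _ _ _ _ (HxR _ Hx) Ho.
    have Hq' : q' \in nth set0 Ss i.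
    { apply (proj2 (HSs i Hi q')). exists y => //. exists x; auto. }
    have Hocc : occurs (nth set0 Ss i) i
        (RNode a [seq RVar (nth set0 Ss i0) i0 | i0 <- iota 0 (rk a)]).
    { econstructor; [|constructor]. apply In_map_iota; eauto. }
    destruct (subst_occ Hsub Hocc) as [t0 [s' [Hn Hs']]].
    destruct (IH s' (nth_error_In _ _ Hn) _ _ Hs' q' Hq') as [t1 Ht1].
    exists t1, s'; auto. }
  exists t'; econstructor; eauto.
Qed.

Lemma domB (Q : finType) (Sig Del : Type) (rk : Sig -> nat)
  (R : Q -> Sig -> rhs Q Del -> Prop) :
  forall s, wf_tree rk s -> forall l : {set Q}, (forall y, y \in l -> dom R y s) ->
    dom (dom_aut_rule rk R) l s.
Proof.
  intros s; induction s as [a ss IH] using tree_ind'.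
  intros Hwf l Hl. inversion Hwf as [a' ss' Hsz Hwfs]; subst.
  set F := (fun q' i t' => exists s', nth_error ss i = Some s' /\ sem R q' s' t').
  set Gamma := (fun q x => R q a x /\ exists t, subst (@Node Del) F x t).
  set Sset := (fun i => [set q' | pb (exists2 q, q \in l & exists x, Gamma q x /\ occurs q' i x)]).
  set Ss := [seq Sset i | i <- iota 0 (rk a)].
  have HSs : forall i, i < rk a -> nth set0 Ss i = Sset i.
  { intros i Hi. rewrite /Ss (nth_map 0); last by rewrite size_iota.
    by rewrite nth_iota. }
  have Hrule : dom_aut_rule rk R l a
      (RNode a [seq RVar (nth set0 Ss i) i | i <- iota 0 (rk a)]).
  { exists Ss; split; [by rewrite size_map size_iota|split => //].
    case: (eqVneq l set0) => [Hl0|Hl0].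
    - left; split; [done|move=> i Hi]. rewrite HSs //. apply/setP => q'.
      rewrite !inE. apply/negbTE/negP => /pbP [q]. by rewrite Hl0 inE.
    - right; split => //. exists Gamma; split.
      + intros q Hq. split; [|by move=> x []].
        destruct (Hl q Hq) as [t Ht]. inversion Ht; subst.
        exists xi; split => //. exists t; auto.
      + intros i Hi q'. rewrite HSs // inE. split; [by move/pbP|by move=> H; apply/pbP]. }
  have [t Ht] : exists t, subst (@Node Sig)
     (fun q' i t' => exists s', nth_error ss i = Some s' /\ sem (dom_aut_rule rk R) q' s' t')
     (RNode a [seq RVar (nth set0 Ss i) i | i <- iota 0 (rk a)]) t.
  { apply occ_subst; intros q i Ho.
    inversion Ho as [|b xs x Hin Ho']; subst.
    apply In_map_iota in Hin. destruct Hin as [j [Hj ->]].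
    inversion Ho'; subst. try rename j into i.
    have Hi' : i < size ss by rewrite Hsz.
    have Hn := @nth_error_nth _ (Node a ss) _ _ Hi'.
    set s' := nth (Node a ss) ss i in Hn.
    have Hin : List.In s' ss by apply (nth_error_In _ _ Hn).
    destruct (IH s' Hin (Hwfs _ Hin) (nth set0 Ss i)) as [t' Ht'].
    { intros q'. rewrite HSs // inE => /pbP [q Hq [x [[_ [t0 Ht0]] Hox]]].
      destruct (subst_occ Ht0 Hox) as [t1 [s'' [Hn' Hs'']]].
      have E : s'' = s' by congruence. rewrite E in Hs''. by exists t1. }
    exists t', s'; auto. }
  exists t; econstructor; eauto.
Qed.

Lemma hat_wf (Q1 Q2 : finType) (Sig Del Om : Type) (rkS : Sig -> nat) (rkD : Del -> nat)
  (R1 : Q1 -> Sig -> rhs Q1 Del -> Prop) (R2 : Q2 -> Del -> rhs Q2 Om -> Prop)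
  (wf1 : forall q a x, R1 q a x -> wf_rhs rkD (rkS a) x) :
  forall y a x q' i, hat_rule rkD R1 R2 y a x -> occurs q' i x -> i < rkS a.
Proof.
  intros y a x q' i [xi [HR Ht]] Ho.
  destruct (translate_occ Ht Ho) as [q0 Hq0].
  exact (wf_occ (wf1 _ _ _ HR) Hq0).
Qed.

Lemma transD (Q1 Q2 : finType) (Del Om : Type) (rkD : Del -> nat)
  (R2 : Q2 -> Del -> rhs Q2 Om -> Prop)
  (wf2 : forall q b x q' j, R2 q b x -> occurs q' j x -> j < rkD b) :
  forall (xi0 : rhs Q1 Del) (S : {set Q2}) xi,
    translate (dom_aut_rule rkD R2) S xi0 xi ->
  forall q2, q2 \in S -> exists g, translate R2 q2 xi g /\
   (forall y q' i, occurs (y, q') i g -> q' \in y.2 /\ occurs y i xi).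
Proof.
  intros xi0; induction xi0 as [q i|b xis IH] using rhs_ind'.
  - intros S xi Ht q2 Hq2. inversion Ht; subst.
    exists (RVar ((q, S), q2) i); split; [constructor|].
    intros y q' i' Ho; inversion Ho; subst; split; [done|constructor].
  - intros S xi Ht q2 Hq2.
    inversion Ht as [|p b' xis' eta z Hr Hs]; subst.
    destruct Hr as [Ss [Hsz [-> [[HS0 _]|[_ [Gamma [HG HSs]]]]]]].
    { by rewrite HS0 inE in Hq2. }
    destruct (HG q2 Hq2) as [[x Hx] HxR].
    inversion Hs as [|b1 xis1 zs Hf]; subst.
    have Key : forall j, j < rkD b -> exists zj, nth_error zs j = Some zj /\
       exists xj, nth_error xis j = Some xj /\
                  translate (dom_aut_rule rkD R2) (nth set0 Ss j) xj zj.
    { intros j Hj.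
      have Hj' : j < size ([seq RVar (nth set0 Ss i) i | i <- iota 0 (rkD b)] : seq (rhs {set Q2} Del))
        by rewrite size_map size_iota.
      have Hn := @nth_error_nth _ (RVar set0 0) _ _ Hj'.
      rewrite (nth_map 0) ?size_iota // nth_iota // add0n in Hn.
      destruct (Forall2_nth_err Hf Hn) as [zj [Hzj Hsj]].
      inversion Hsj as [q0 i0 x0 [xj [Hxj Htj]]|]; subst.
      exists zj; split => //. exists xj; auto. }
    set G := (fun p' j z' => exists xj', nth_error zs j = Some xj' /\ translate R2 p' xj' z' /\
              (forall y q' i, occurs (y, q') i z' -> q' \in y.2 /\ occurs y i xj')).
    have [g Hg] : exists g, subst (@RNode (Q1 * {set Q2} * Q2) Om) G x g.
    { apply occ_subst. intros p' j Ho.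
      have Hj := wf2 _ _ _ _ _ (HxR _ Hx) Ho.
      have Hp' : p' \in nth set0 Ss j.
      { apply (proj2 (HSs j Hj p')). exists q2 => //. exists x; auto. }
      destruct (Key j Hj) as [zj [Hzj [xj [Hxj Htj]]]].
      destruct (IH xj (nth_error_In _ _ Hxj) _ _ Htj p' Hp') as [g' [Hg' Hocc]].
      exists g', zj; auto. }
    exists g; split.
    + econstructor; [exact (HxR _ Hx)|].
      eapply subst_mono; [|exact Hg].
      intros q i z' [xj' [H1 [H2 _]]]; eauto.
    + intros y q' i Ho.
      destruct (subst_occ_back Hg Ho) as [p' [j [z' [[xj' [H1 [H2 H3]]] H4]]]].
      destruct (H3 _ _ _ H4) as [H5 H6]; split => //.
      econstructor; [exact (nth_error_In _ _ H1)|exact H6].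
Qed.

Arguments hat_wf {Q1 Q2 Sig Del Om rkS rkD R1 R2}.
Arguments transD {Q1 Q2 Del Om rkD R2}.

Lemma Forall2_map_l {A B : Type} (R : A -> B -> Prop) (f : B -> A) (l : seq B) :
  (forall x, List.In x l -> R (f x) x) -> Forall2 R (map f l) l.
Proof.
  elim: l => [|x l IH] H /=; constructor; [apply H; simpl; auto|].
  apply IH => y Hy; apply H; simpl; auto.
Qed.

Lemma dirE (Q1 Q2 : finType) (Sig Del Om : Type) (rkS : Sig -> nat) (rkD : Del -> nat)
  (R1 : Q1 -> Sig -> rhs Q1 Del -> Prop) (R2 : Q2 -> Del -> rhs Q2 Om -> Prop)
  (wf1 : forall q a x, R1 q a x -> wf_rhs rkD (rkS a) x) :
  forall s r, relabel (dom (Ahat_rule rkS rkD R1 R2)) s r ->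
  forall x, dom (M_rule rkS rkD R1 R2) x r -> dom (hat_rule rkD R1 R2) x.1 s.
Proof.
  intros s r Hrel x [t Ht].
  inversion Hrel as [a ss ls rs HF Hrs]; subst.
  inversion Ht as [x' al ss' g t' HM Hsub]; subst.
  destruct HM as [_ [_ [Hsz [xi [Hhat [_ Hocc]]]]]].
  simpl in Hsz, Hocc.
  have [t0 Ht0] : exists t0, subst (@Node Del)
      (fun q' i t' => exists s', nth_error ss i = Some s' /\
                      sem (hat_rule rkD R1 R2) q' s' t') xi t0.
  { apply occ_subst; intros y i Ho.
    have Hi := hat_wf wf1 _ _ _ _ _ Hhat Ho.
    have Hy := Hocc i Hi y Ho.
    rewrite -Hsz in Hi.
    have Hn := @nth_error_nth _ set0 _ _ Hi.
    destruct (Forall2_nth_err HF Hn) as [s' [Hs' Hd]].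
    destruct Hd as [ta Hta].
    destruct (@domA _ _ _ rkS _ (hat_wf wf1) _ _ _ Hta y Hy) as [t1 Ht1].
    exists t1, s'; auto. }
  exists t0; econstructor; eauto.
Qed.

Arguments dirE {Q1 Q2 Sig Del Om rkS rkD R1 R2}.

Lemma dirC (Q1 Q2 : finType) (Sig Del Om : Type) (rkS : Sig -> nat) (rkD : Del -> nat)
  (R1 : Q1 -> Sig -> rhs Q1 Del -> Prop) (R2 : Q2 -> Del -> rhs Q2 Om -> Prop)
  (wf2 : forall q b x q' j, R2 q b x -> occurs q' j x -> j < rkD b) :
  forall s, wf_tree rkS s -> exists r, relabel (dom (Ahat_rule rkS rkD R1 R2)) s r /\
   forall q1 (S : {set Q2}) q2, q2 \in S -> dom (hat_rule rkD R1 R2) (q1, S) s ->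
     dom (M_rule rkS rkD R1 R2) (q1, S, q2) r.
Proof.
  intros s; induction s as [a ss IH] using tree_ind'.
  intros Hwf. inversion Hwf as [a' ss' Hsz Hwfs]; subst.
  destruct (@Forall2_exists _ _ (fun s' r' => relabel (dom (Ahat_rule rkS rkD R1 R2)) s' r' /\
   forall q1 (S : {set Q2}) q2, q2 \in S -> dom (hat_rule rkD R1 R2) (q1, S) s' ->
     dom (M_rule rkS rkD R1 R2) (q1, S, q2) r') ss) as [rs Hrs].
  { intros s' Hin. exact (IH s' Hin (Hwfs _ Hin)). }
  set Lf := (fun s' => [set y | pb (dom (hat_rule rkD R1 R2) y s')]).
  set ls := map Lf ss.
  exists (Node (a, ls) rs). split.
  { constructor.
    - apply Forall2_map_l => s' Hin. apply domB; [exact (Hwfs _ Hin)|].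
      intros y. rewrite inE. by move/pbP.
    - eapply List.Forall2_impl; [|exact Hrs]. by move=> ? ? [].
  }
  intros q1 S q2 Hq2 [t Ht].
  inversion Ht as [y a' ss' xi t' Hr Hsub]; subst.
  destruct Hr as [xi0 [HR1 Htr]].
  destruct (transD wf2 _ _ _ Htr _ Hq2) as [g [Hg Hgocc]].
  have [tM HtM] : exists tM, subst (@Node Om)
      (fun q' i t' => exists r', nth_error rs i = Some r' /\
                      sem (M_rule rkS rkD R1 R2) q' r' t') g tM.
  { apply occ_subst; intros [y q'] i Ho.
    destruct (Hgocc _ _ _ Ho) as [Hq' Hoy].
    destruct (subst_occ Hsub Hoy) as [t0 [s' [Hs' Hsem]]].
    destruct (Forall2_nth_err Hrs Hs') as [r' [Hr' [_ HP]]].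
    destruct y as [y1 y2].
    destruct (HP y1 y2 q' Hq' (ex_intro _ t0 Hsem)) as [t1 Ht1].
    exists t1, r'; auto. }
  exists tM; econstructor; [|exact HtM].
  split; [exact Hq2|split].
  { intros [y q'] i Ho. exact (proj1 (Hgocc _ _ _ Ho)). }
  split; [by rewrite /= size_map|].
  exists xi; split; [exists xi0; auto|split; [exact Hg|]].
  intros i Hi y Hy. simpl in Hi |- *.
  destruct (subst_occ Hsub Hy) as [t0 [s' [Hs' Hsem]]].
  destruct (@nth_error_nthE _ (Node a ss) _ _ _ Hs') as [Hnth Hlt].
  rewrite /ls (nth_map (Node a ss)) // Hnth inE. apply/pbP. by exists t0.
Qed.

Arguments dirC {Q1 Q2 Sig Del Om rkS rkD R1 R2}.

Theorem lemma16 (Q1 Q2 Sig Del Om : finType)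
  (rkS : Sig -> nat) (rkD : Del -> nat) (rkO : Om -> nat)
  (T1 : tdtt Q1 Sig Del) (T2 : tdtt Q2 Del Om) :
  is_tdtt rkS rkD T1 -> is_tdtt rkD rkO T2 ->
  forall (q1 : Q1) (S : {set Q2}) (q2 : Q2), q2 \in S ->
  forall s : tree Sig, wf_tree rkS s ->
    (M_dom rkS rkD (rule T1) (rule T2) (q1, S, q2) s <->
     dom (hat_rule rkD (rule T1) (rule T2)) (q1, S) s).
Proof.
  intros [_ wf1] [_ wf2'] q1 S q2 Hq2 s Hwf.
  have wf2 : forall q b x q' j, rule T2 q b x -> occurs q' j x -> j < rkD b.
  { intros q b x q' j HR Ho. exact (wf_occ (wf2' _ _ _ HR) Ho). }
  split.
  - intros [r [Hrel Hd]]. exact (dirE wf1 _ _ Hrel _ Hd).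
  - intros Hd. destruct (dirC (R1 := rule T1) wf2 _ Hwf) as [r [Hrel HC]].
    exists r; split; auto.
Qed.
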